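(* Let $B$ be a Banach $A$-bimodule, where $A$ has a bounded approximate identity, and suppose $B^*A=B^*$. (1) If every element of $A$ has the $Rw^*w$-property with respect to $A$, then $Z_{B^{**}}(A^{**})=A^{**}$. (2) If every element of $A$ has the $Rw^*w$-property with respect to $B$, then $Z_{A^{**}}(B^{**})=B^{**}$.
   Context: $A$ is a Banach algebra, $B$ a Banach $A$-bimodule with actions $\pi_\ell(a,b)=ab$, $\pi_r(b,a)=ba$. For a bounded bilinear $m:X\times Y\to Z$: $m^*:Z^*\times X\to Y^*$, $\langle m^*(z',x),y\rangle=\langle z',m(x,y)\rangle$; $m^{**}:Y^{**}\times Z^*\to X^*$, $\langle m^{**}(y'',z'),x\rangle=\langle y'',m^*(z',x)\rangle$; $m^{***}:X^{**}\times Y^{**}\to Z^{**}$, $\langle m^{***}(x'',y''),z'\rangle=\langle x'',m^{**}(y'',z')\rangle$. For $b'\in B^*$, $a\in A$: $\langle b'a,b\rangle=\langle b',ab\rangle$; $B^*A=\{b'a:b'\in B^*,a\in A\}$. An element $a\in A$ has the $Rw^*w$-property with respect to $B$ if for every net $(b'_\alpha)\subseteq B^*$, $b'_\alpha a\to0$ weak$^*$ implies $b'_\alpha a\to0$ weakly (in $\sigma(B^*,B^{**})$); ''with respect to $A$'' means $B=A$ as a bimodule over itself (so $\langle a'a,c\rangle=\langle a',ac\rangle$ for $a'\in A^*$). $Z_{B^{**}}(A^{**})=\{a''\in A^{**}:b''\mapsto\pi_\ell^{***}(a'',b'')$ weak$^*$-to-weak$^*$ continuous$\}$; $Z_{A^{**}}(B^{**})=\{b''\in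 B^{**}:a''\mapsto\pi_r^{***}(b'',a'')$ weak$^*$-to-weak$^*$ continuous$\}$. *)

(* Defs.v *)
From Stdlib Require Import Reals.
Open Scope R_scope.

Record BanachSpace := mkBanach {
  car :> Type;
  zero : car;
  add : car -> car -> car;
  opp : car -> car;
  scal : R -> car -> car;
  norm : car -> R;
  add_assoc : forall x y z, add x (add y z) = add (add x y) z;
  add_comm : forall x y, add x y = add y x;
  add_zero : forall x, add x zero = x;
  add_opp : forall x, add x (opp x) = zero;
  scal_assoc : forall a b x, scal a (scal b x) = scal (a * b) x;
  scal_one : forall x, scal 1 x = x;
  scal_distr_l : forall a x y, scal a (add x y) = add (scal a x) (scal a y);
  scal_distr_r : forall a b x, scal (a + b) x = add (scal a x) (scal b x);
  norm_eq0 : forall x, norm x = 0 <-> x = zero;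
  norm_triangle : forall x y, norm (add x y) <= norm x + norm y;
  norm_scal : forall a x, norm (scal a x) = Rabs a * norm x;
  complete : forall u : nat -> car,
    (forall eps, 0 < eps -> exists N, forall m n, (N <= m)%nat -> (N <= n)%nat ->
        norm (add (u m) (opp (u n))) < eps) ->
    exists l, forall eps, 0 < eps -> exists N, forall n, (N <= n)%nat ->
        norm (add (u n) (opp l)) < eps
}.
Arguments zero {_}. Arguments add {_}. Arguments opp {_}.
Arguments scal {_}. Arguments norm {_}.

Record BanachAlgebra (A : BanachSpace) := mkBanachAlgebra {
  mul : A -> A -> A;
  mul_assoc : forall x y z, mul x (mul y z) = mul (mul x y) z;
  mul_addl : forall x y z, mul (add x y) z = add (mul x z) (mul y z);
  mul_addr : forall x y z, mul x (add y z) = add (mul x y) (mul x z);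
  mul_scall : forall a x y, mul (scal a x) y = scal a (mul x y);
  mul_scalr : forall a x y, mul x (scal a y) = scal a (mul x y);
  norm_mul : forall x y, norm (mul x y) <= norm x * norm y
}.
Arguments mul {_}.

Record Bimodule (A : BanachSpace) (Alg : BanachAlgebra A) (B : BanachSpace) := mkBimodule {
  lact : A -> B -> B;
  ract : B -> A -> B;
  lact_addl : forall a c b, lact (add a c) b = add (lact a b) (lact c b);
  lact_addr : forall a b d, lact a (add b d) = add (lact a b) (lact a d);
  lact_scall : forall r a b, lact (scal r a) b = scal r (lact a b);
  lact_scalr : forall r a b, lact a (scal r b) = scal r (lact a b);
  ract_addl : forall b d a, ract (add b d) a = add (ract b a) (ract d a);
  ract_addr : forall b a c, ract b (add a c) = add (ract b a) (ract b c);
  ract_scall : forall r b a, ract (scal r b) a = scal r (ract b a);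
  ract_scalr : forall r b a, ract b (scal r a) = scal r (ract b a);
  lact_assoc : forall a c b, lact a (lact c b) = lact (mul Alg a c) b;
  ract_assoc : forall b a c, ract (ract b a) c = ract b (mul Alg a c);
  lr_assoc : forall a b c, ract (lact a b) c = lact a (ract b c);
  norm_lact : forall a b, norm (lact a b) <= norm a * norm b;
  norm_ract : forall b a, norm (ract b a) <= norm b * norm a
}.
Arguments lact {_ _ _}. Arguments ract {_ _ _}.

(** Elements of X' are represented by functions X -> R
    satisfying [dual]; elements of X'' by functions (X -> R) -> R satisfying
    [bidual] (their values on non-functionals are irrelevant). *)
Definition dual (X : BanachSpace) (f : X -> R) : Prop :=
  (forall x y, f (add x y) = f x + f y) /\
  (forall r x, f (scal r x) = r * f x) /\
  (exists M, forall x, Rabs (f x) <= M * norm x).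

Definition opbound (X : BanachSpace) (f : X -> R) (c : R) : Prop :=
  0 <= c /\ forall x, Rabs (f x) <= c * norm x.

Definition bidual (X : BanachSpace) (F : (X -> R) -> R) : Prop :=
  (forall f g, dual X f -> dual X g -> F (fun x => f x + g x) = F f + F g) /\
  (forall r f, dual X f -> F (fun x => r * f x) = r * F f) /\
  (exists M, forall f c, dual X f -> opbound X f c -> Rabs (F f) <= M * c).

Definition directed (I : Type) (le : I -> I -> Prop) : Prop :=
  inhabited I /\ (forall i, le i i) /\
  (forall i j k, le i j -> le j k -> le i k) /\
  (forall i j, exists k, le i k /\ le j k).

Definition net_conv (I : Type) (le : I -> I -> Prop) (u : I -> R) (l : R) : Prop :=
  forall eps, 0 < eps -> exists i0, forall i, le i0 i -> Rabs (u i - l) < eps.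

Definition wstar_wstar_cont (X Y : BanachSpace)
  (F : ((X -> R) -> R) -> ((Y -> R) -> R)) : Prop :=
  forall (I : Type) (le : I -> I -> Prop), directed I le ->
  forall (u : I -> (X -> R) -> R) (v : (X -> R) -> R),
    (forall i, bidual X (u i)) -> bidual X v ->
    (forall f, dual X f -> net_conv I le (fun i => u i f) (v f)) ->
    forall g, dual Y g -> net_conv I le (fun i => F (u i) g) (F v g).

Definition has_bai (A : BanachSpace) (Alg : BanachAlgebra A) : Prop :=
  exists (I : Type) (le : I -> I -> Prop) (e : I -> A) (K : R),
    directed I le /\ (forall i, norm (e i) <= K) /\
    (forall a, net_conv I le (fun i => norm (add (mul Alg (e i) a) (opp a))) 0 /\
               net_conv I le (fun i => norm (add (mul Alg a (e i)) (opp a))) 0).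

(** B' A = B' : every functional b' factors as b'' a. *)
Definition dual_factors (A B : BanachSpace) (lact : A -> B -> B) : Prop :=
  forall f, dual B f -> exists g a, dual B g /\ forall b, f b = g (lact a b).

(** The Rw*w-property of a with respect to the left action [lact] of A on B:
    for nets b'_alpha in B', b'_alpha a -> 0 weak-star implies weakly. *)
Definition Rwsw (A B : BanachSpace) (lact : A -> B -> B) (a : A) : Prop :=
  forall (I : Type) (le : I -> I -> Prop), directed I le ->
  forall (bp : I -> B -> R), (forall i, dual B (bp i)) ->
    (forall b, net_conv I le (fun i => bp i (lact a b)) 0) ->
    (forall G, bidual B G -> net_conv I le (fun i => G (fun b => bp i (lact a b))) 0).

Definition pil3 (A B : BanachSpace) (lact : A -> B -> B)
  (a2 : (A -> R) -> R) (b2 : (B -> R) -> R) : (B -> R) -> R :=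
  fun bp => a2 (fun a => b2 (fun b => bp (lact a b))).
Definition pir3 (A B : BanachSpace) (ract : B -> A -> B)
  (b2 : (B -> R) -> R) (a2 : (A -> R) -> R) : (B -> R) -> R :=
  fun bp => b2 (fun b => a2 (fun a => bp (ract b a))).

Definition Z_Bbb_Abb (A B : BanachSpace) (lact : A -> B -> B) (a2 : (A -> R) -> R) : Prop :=
  bidual A a2 /\ wstar_wstar_cont B B (fun b2 => pil3 A B lact a2 b2).
Definition Z_Abb_Bbb (A B : BanachSpace) (ract : B -> A -> B) (b2 : (B -> R) -> R) : Prop :=
  bidual B b2 /\ wstar_wstar_cont A B (fun a2 => pir3 A B ract b2 a2).

(* Main.v *)
Require Import Defs.
From Stdlib Require Import Reals Lra FunctionalExtensionality.
Open Scope R_scope.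

Lemma norm_nonneg (X : BanachSpace) (x : X) : 0 <= norm x.
Proof.
  assert (H0 : norm (scal 0 x) = 0) by (rewrite norm_scal, Rabs_R0; ring).
  assert (H1 : norm (scal (-1) x) = norm x).
  { rewrite norm_scal. replace (Rabs (-1)) with 1 by (rewrite Rabs_left; lra). ring. }
  assert (H2 : scal 0 x = add x (scal (-1) x)).
  { replace 0 with (1 + -1) by ring. rewrite scal_distr_r, scal_one. reflexivity. }
  pose proof (norm_triangle X x (scal (-1) x)) as T.
  rewrite <- H2, H0, H1 in T. lra.
Qed.

Lemma dual_opb (X : BanachSpace) f : dual X f -> exists M, opbound X f M.
Proof.
  intros [_ [_ [M HM]]]. exists (Rabs M). split; [apply Rabs_pos|].
  intro x. eapply Rle_trans; [apply HM|].
  apply Rmult_le_compat_r; [apply norm_nonneg|apply RRle_abs].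
Qed.

Lemma comp_dual (X Y : BanachSpace) (T : X -> Y) C (HC : 0 <= C)
  (Hadd : forall x y, T (add x y) = add (T x) (T y))
  (Hsc : forall r x, T (scal r x) = scal r (T x))
  (Hbd : forall x, norm (T x) <= C * norm x)
  f c (Hf : dual Y f) (Hc : opbound Y f c) :
  dual X (fun x => f (T x)) /\ opbound X (fun x => f (T x)) (c * C).
Proof.
  destruct Hf as [Fa [Fs _]]. destruct Hc as [Hc0 Hc].
  assert (B : forall x, Rabs (f (T x)) <= c * C * norm x).
  { intro x. eapply Rle_trans; [apply Hc|]. rewrite Rmult_assoc.
    apply Rmult_le_compat_l; auto. }
  split; [split; [|split]|split].
  - intros x y; simpl. rewrite Hadd; apply Fa.
  - intros r x; simpl. rewrite Hsc; apply Fs.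
  - exists (c * C); exact B.
  - apply Rmult_le_pos; auto.
  - exact B.
Qed.

Lemma dual_lin (X : BanachSpace) f g r : dual X f -> dual X g ->
  dual X (fun x => f x + r * g x).
Proof.
  intros [Fa [Fs [M1 H1]]] [Ga [Gs [M2 H2]]].
  split; [|split].
  - intros x y. rewrite Fa, Ga. ring.
  - intros s x. rewrite Fs, Gs. ring.
  - exists (M1 + Rabs r * M2). intro x.
    eapply Rle_trans; [apply Rabs_triang|]. rewrite Rabs_mult.
    pose proof (H1 x). pose proof (H2 x).
    assert (Rabs r * Rabs (g x) <= Rabs r * (M2 * norm x))
      by (apply Rmult_le_compat_l; auto; apply Rabs_pos).
    nra.
Qed.

Lemma bidual_lin (X : BanachSpace) G f g : bidual X G -> dual X f -> dual X g ->
  G (fun x => f x + -1 * g x) = G f + -1 * G g.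
Proof.
  intros [Ga [Gs _]] Hf Hg.
  assert (Hh : dual X (fun x => -1 * g x)).
  { pose proof (dual_lin X (fun _ => 0) g (-1)) as D.
    assert (dual X (fun _ => 0)).
    { split; [intros; ring|split; [intros; ring|exists 0; intros; rewrite Rabs_R0; lra]]. }
    specialize (D H Hg).
    replace (fun x => -1 * g x) with (fun x : X => 0 + -1 * g x); auto.
    apply functional_extensionality; intros; ring. }
  rewrite (Ga f (fun x => -1 * g x) Hf Hh). rewrite Gs; auto.
Qed.

Lemma key (A X : BanachSpace) (l : A -> X -> X) a0 (HR : Rwsw A X l a0)
  I le (Hd : directed I le) (k : I -> X -> R) (k0 : X -> R)
  (Hk : forall i, dual X (k i)) (Hk0 : dual X k0)
  (Hcomp : forall f, dual X f -> dual X (fun x => f (l a0 x)))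
  (Hp : forall x, net_conv I le (fun i => k i (l a0 x)) (k0 (l a0 x)))
  G (HG : bidual X G) :
  net_conv I le (fun i => G (fun x => k i (l a0 x))) (G (fun x => k0 (l a0 x))).
Proof.
  pose (bp := fun i x => k i x + -1 * k0 x).
  assert (Hbp : forall i, dual X (bp i)) by (intro; apply dual_lin; auto).
  assert (Hpre : forall b, net_conv I le (fun i => bp i (l a0 b)) 0).
  { intros b eps He. destruct (Hp b eps He) as [i0 Hi0]. exists i0.
    intros i Hi. specialize (Hi0 i Hi). unfold bp.
    replace (k i (l a0 b) + -1 * k0 (l a0 b) - 0) with (k i (l a0 b) - k0 (l a0 b)) by ring.
    exact Hi0. }
  pose proof (HR I le Hd bp Hbp Hpre G HG) as C.
  intros eps He. destruct (C eps He) as [i0 Hi0]. exists i0.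
  intros i Hi. specialize (Hi0 i Hi). unfold bp in Hi0. simpl in Hi0.
  rewrite (bidual_lin X G (fun x => k i (l a0 x)) (fun x => k0 (l a0 x))) in Hi0;
    auto.
  replace (G (fun x => k i (l a0 x)) - G (fun x => k0 (l a0 x))) with
    (G (fun x => k i (l a0 x)) + -1 * G (fun x => k0 (l a0 x)) - 0) by ring.
  exact Hi0.
Qed.

Theorem mainTheorem7 (A : BanachSpace) (Alg : BanachAlgebra A)
  (B : BanachSpace) (M : Bimodule A Alg B) :
  has_bai A Alg ->
  dual_factors A B (lact M) ->
  ((forall a : A, Rwsw A A (mul Alg) a) ->
     forall a2 : (A -> R) -> R, Z_Bbb_Abb A B (lact M) a2 <-> bidual A a2) /\
  ((forall a : A, Rwsw A B (lact M) a) ->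
     forall b2 : (B -> R) -> R, Z_Abb_Bbb A B (ract M) b2 <-> bidual B b2).
Proof.
  intros _ Hfac. split.
  - intros Hrw a2. split; [intros [H _]; exact H|]. intro Ha2. split; [exact Ha2|].
    intros I le Hd u v Hu Hv Hconv g Hg.
    destruct (Hfac g Hg) as [g' [a0 [Hg' Hgeq]]].
    destruct (dual_opb B g' Hg') as [cg Hcg].
    assert (D1 : forall c, dual B (fun b => g' (lact M c b)) /\
                           opbound B (fun b => g' (lact M c b)) (cg * norm c)).
    { intro c. apply (comp_dual B B (lact M c) (norm c) (norm_nonneg A c) (lact_addr _ _ _ M c)
        (fun r => lact_scalr _ _ _ M r c) (norm_lact _ _ _ M c) g' cg Hg' Hcg). }
    assert (Kd : forall w, bidual B w -> dual A (fun c => w (fun b => g' (lact M c b)))).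
    { intros w [Wa [Ws [Mw HMw]]]. split; [|split].
      - intros x y. rewrite <- Wa by (apply D1).
        f_equal. apply functional_extensionality; intro b.
        rewrite lact_addl. apply Hg'.
      - intros r x. rewrite <- Ws by (apply D1).
        f_equal. apply functional_extensionality; intro b.
        rewrite lact_scall. apply Hg'.
      - exists (Mw * cg). intro x. destruct (D1 x) as [Dx Ox].
        specialize (HMw _ _ Dx Ox). rewrite Rmult_assoc. exact HMw. }
    unfold pil3.
    assert (E : forall w : (B -> R) -> R,
      (fun a => w (fun b => g (lact M a b))) =
      (fun a => (fun c => w (fun b => g' (lact M c b))) (mul Alg a0 a))).
    { intro w. apply functional_extensionality; intro a. simpl. f_equal.
      apply functional_extensionality; intro b. rewrite Hgeq, lact_assoc. reflexivity. }
    rewrite (E v).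
    replace (fun i => a2 (fun a => u i (fun b => g (lact M a b)))) with
      (fun i => a2 (fun a => (fun c => u i (fun b => g' (lact M c b))) (mul Alg a0 a)))
      by (apply functional_extensionality; intro i; rewrite (E (u i)); reflexivity).
    apply (key A A (mul Alg) a0 (Hrw a0) I le Hd
             (fun i c => u i (fun b => g' (lact M c b)))
             (fun c => v (fun b => g' (lact M c b)))); auto.
    + intros f Hf. destruct (dual_opb A f Hf) as [cf Hcf].
      apply (comp_dual A A (mul Alg a0) (norm a0) (norm_nonneg A a0) (mul_addr _ Alg a0)
        (fun r => mul_scalr _ Alg r a0) (norm_mul _ Alg a0) f cf Hf Hcf).
    + intro x. apply Hconv. apply D1.
  - intros Hrw b2. split; [intros [H _]; exact H|]. intro Hb2. split; [exact Hb2|].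
    intros I le Hd u v Hu Hv Hconv g Hg.
    destruct (Hfac g Hg) as [g' [a0 [Hg' Hgeq]]].
    destruct (dual_opb B g' Hg') as [cg Hcg].
    assert (D1 : forall b, dual A (fun a => g' (ract M b a)) /\
                           opbound A (fun a => g' (ract M b a)) (cg * norm b)).
    { intro b. apply (comp_dual A B (ract M b) (norm b) (norm_nonneg B b) (ract_addr _ _ _ M b)
        (fun r => ract_scalr _ _ _ M r b)
        (norm_ract _ _ _ M b) g' cg Hg' Hcg). }
    assert (Kd : forall w, bidual A w -> dual B (fun b => w (fun a => g' (ract M b a)))).
    { intros w [Wa [Ws [Mw HMw]]]. split; [|split].
      - intros x y. rewrite <- Wa by (apply D1).
        f_equal. apply functional_extensionality; intro a.
        rewrite ract_addl. apply Hg'.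
      - intros r x. rewrite <- Ws by (apply D1).
        f_equal. apply functional_extensionality; intro a.
        rewrite ract_scall. apply Hg'.
      - exists (Mw * cg). intro x. destruct (D1 x) as [Dx Ox].
        specialize (HMw _ _ Dx Ox). rewrite Rmult_assoc. exact HMw. }
    unfold pir3.
    assert (E : forall w : (A -> R) -> R,
      (fun b => w (fun a => g (ract M b a))) =
      (fun b => (fun c => w (fun a => g' (ract M c a))) (lact M a0 b))).
    { intro w. apply functional_extensionality; intro b. simpl. f_equal.
      apply functional_extensionality; intro a. rewrite Hgeq, lr_assoc. reflexivity. }
    rewrite (E v).
    replace (fun i => b2 (fun b => u i (fun a => g (ract M b a)))) with
      (fun i => b2 (fun b => (fun c => u i (fun a => g' (ract M c a))) (lact M a0 b)))
      by (apply functional_extensionality; intro i; rewrite (E (u i)); reflexivity).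
    apply (key A B (lact M) a0 (Hrw a0) I le Hd
             (fun i c => u i (fun a => g' (ract M c a)))
             (fun c => v (fun a => g' (ract M c a)))); auto.
    + intros f Hf. destruct (dual_opb B f Hf) as [cf Hcf].
      apply (comp_dual B B (lact M a0) (norm a0) (norm_nonneg A a0) (lact_addr _ _ _ M a0)
        (fun r => lact_scalr _ _ _ M r a0) (norm_lact _ _ _ M a0) f cf Hf Hcf).
    + intro x. apply Hconv. apply D1.
Qed.
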